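(* Let $G$ be a connected partial cube and let $E_1,\ldots,E_d$ be its $\Theta$-classes. For $k\in\{1,\ldots,d\}$ let $U$ and $U'$ be the two connected components of $G-E_k$, and for $e,f\in E(G)$ set $\delta_k(e,f)=1$ if ($e\in E(U)$ and $f\in E(U')$) or ($e\in E(U')$ and $f\in E(U)$), and $\delta_k(e,f)=0$ otherwise. Then for all $e,f\in E(G)$, $$\widehat{d}(e,f)=\sum_{k=1}^{d}\delta_k(e,f).$$
   Context: A partial cube is a graph isomorphic to an isometric subgraph of a hypercube $Q_n$ (i.e. distances in the subgraph equal distances in $Q_n$). The Djoković–Winkler relation $\Theta$ on $E(G)$ is defined by: $xy\,\Theta\,uv$ iff $d(x,u)+d(y,v)\neq d(x,v)+d(y,u)$, where $d$ is the shortest-path distance. In a partial cube $\Theta$ is an equivalence relation; its classes are the $\Theta$-classes, and for each $\Theta$-class $E_k$ the graph $G-E_k$ has exactly two connected components. For edges $e=ab$ and $f=xy$, $\widehat{d}(e,f)=\min\{d(a,x),d(a,y),d(b,x),d(b,y)\}$. *)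

(* Defs.v *)
From mathcomp Require Import all_boot.
Set Implicit Arguments. Unset Strict Implicit. Unset Printing Implicit Defensive.

Section Graphs.
Variable T : finType.
Implicit Types (e : rel T) (x y u v a b : T).

Definition simple_graph e := irreflexive e /\ symmetric e.

Definition connected_graph e := forall x y, connect e x y.

Definition walkb e x y (n : nat) : bool :=
  [exists p : n.-tuple T, path e x p && (last x p == y)].

(* shortest-path distance: least n with a walk of length n
   (a shortest walk has length < #|T|; returns #|T| if none exists) *)
Definition dist e x y : nat := find (walkb e x y) (iota 0 #|T|).

Definition hamming n (s t : {ffun 'I_n -> bool}) : nat := #|[set i | s i != t i]|.

Definition partial_cube e :=
  exists n (f : T -> {ffun 'I_n -> bool}),
    forall x y, dist e x y = hamming (f x) (f y).

(* edges are represented as darts (ordered pairs (a,b) with e a b);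
   all notions below are invariant under reversing orientation *)
Definition dart e (p : T * T) : bool := e p.1 p.2.

Definition theta e (p q : T * T) : bool :=
  dist e p.1 q.1 + dist e p.2 q.2 != dist e p.1 q.2 + dist e p.2 q.1.

Definition theta_class e (p : T * T) : {set T * T} :=
  [set q | dart e q & theta e p q].

Definition theta_classes e : {set {set T * T}} :=
  [set theta_class e p | p in [set q | dart e q]].

Definition remove_edges e (K : {set T * T}) : rel T :=
  fun x y => e x y && ((x, y) \notin K).

Definition delta e (K : {set T * T}) (p q : T * T) : nat :=
  [&& p \notin K, q \notin K & ~~ connect (remove_edges e K) p.1 q.1].

Definition dhat e (p q : T * T) : nat :=
  minn (minn (dist e p.1 q.1) (dist e p.1 q.2))
       (minn (dist e p.2 q.1) (dist e p.2 q.2)).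

End Graphs.

(* Main.v *)
Require Import Defs.
From mathcomp Require Import all_boot.
From mathcomp Require Import zify.
Set Implicit Arguments. Unset Strict Implicit. Unset Printing Implicit Defensive.

Definition flip1 n (s s' : {ffun 'I_n -> bool}) (c : 'I_n) :=
  forall k, (s k == s' k) = (k != c).

Lemma flipE n (s s' : {ffun 'I_n -> bool}) c : flip1 s s' c ->
  forall k, s' k = (if k == c then ~~ s k else s k).
Proof. move=> H k; have := H k; case: (k == c); case: (s k); case: (s' k) => //. Qed.

Lemma ham1 n (s s' : {ffun 'I_n -> bool}) : hamming s s' = 1 -> exists c, flip1 s s' c.
Proof.
rewrite /hamming => /eqP/cards1P [c Hc]; exists c => k.
have := congr1 (fun A : {set 'I_n} => k \in A) Hc; rewrite /= !inE => H.
by rewrite -H negbK.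
Qed.

Lemma hamE n (s t : {ffun 'I_n -> bool}) : hamming s t = \sum_i (s i != t i).
Proof.
rewrite /hamming -sum1_card big_mkcond /=; apply: eq_bigr => i _.
by rewrite inE; case: (s i != t i).
Qed.

Lemma ham_split n (s s' t : {ffun 'I_n -> bool}) c : flip1 s s' c ->
  hamming s t + (s' c != t c) = hamming s' t + (s c != t c).
Proof.
move=> H; rewrite !hamE.
have -> : \sum_i (s i != t i) = (s c != t c) + \sum_(i | i != c) (s i != t i).
  by rewrite (bigD1 c).
have -> : \sum_i (s' i != t i) = (s' c != t c) + \sum_(i | i != c) (s' i != t i).
  by rewrite (bigD1 c).
have -> : \sum_(i | i != c) (s' i != t i) = \sum_(i | i != c) (s i != t i).
  by apply: eq_bigr => i Hi; rewrite (flipE H) (negbTE Hi).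
lia.
Qed.

Lemma ham_theta n (a b u v : {ffun 'I_n -> bool}) i j : flip1 a b i -> flip1 u v j ->
  (hamming a u + hamming b v != hamming a v + hamming b u) = (i == j).
Proof.
move=> Hb Hv; rewrite !hamE -!big_split /=.
case: (i =P j) => [Eij | Hij].
- subst j.
  rewrite (bigD1 i) //= [X in _ != X](bigD1 i) //=.
  have -> : \sum_(k | k != i) ((a k != u k) + (b k != v k)) =
            \sum_(k | k != i) ((a k != v k) + (b k != u k)).
    apply: eq_bigr => k Hk; rewrite (flipE Hb) (flipE Hv) (negbTE Hk).
    by case: (a k); case: (u k).
  rewrite (flipE Hb) (flipE Hv) eqxx.
  set X := \sum_(k | k != i) _.
  by case: (a i); case: (u i) => /=; lia.
- apply/negbTE; rewrite negbK; apply/eqP; apply: eq_bigr => k _.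
  rewrite (flipE Hb) (flipE Hv).
  case Ei: (k == i); case Ej: (k == j).
  + by exfalso; apply: Hij; rewrite -(eqP Ei) -(eqP Ej).
  + by case: (a k); case: (u k).
  + by case: (a k); case: (u k).
  + by [].
Qed.

Lemma walk0 (T : finType) (e : rel T) x y : walkb e x y 0 -> x = y.
Proof. by case/existsP => t /andP [_ /eqP]; rewrite (tuple0 t). Qed.

Lemma walkS (T : finType) (e : rel T) x y k : walkb e x y k.+1 ->
  exists2 x', e x x' & walkb e x' y k.
Proof.
case/existsP => t; case: t => [[|x' s] //= Hs] /andP [/andP [Hxx' Hp] Hl].
exists x' => //; apply/existsP; exists (@Tuple k T s Hs); by rewrite /= Hp Hl.
Qed.

Lemma path_walk (T : finType) (e : rel T) x p : path e x p -> walkb e x (last x p) (size p).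
Proof. by move=> Hp; apply/existsP; exists (in_tuple p); rewrite /= Hp eqxx. Qed.

Lemma dist_spec (T : finType) (e : rel T) x y : connect e x y ->
  dist e x y < #|T| /\ walkb e x y (dist e x y).
Proof.
move/connectP=> [p Hp ->]; case/shortenP: Hp => p' Hp' Hu _.
have Hlt : size p' < #|T|.
  have := max_card (mem (x :: p')); by rewrite (card_uniqP Hu).
have Hh : has (walkb e x (last x p')) (iota 0 #|T|).
  by apply/hasP; exists (size p'); [rewrite mem_iota | exact: path_walk].
have Hf : dist e x (last x p') < #|T|.
  by rewrite /dist -{2}(size_iota 0 #|T|) -has_find.
split => //.
have := nth_find 0 Hh; rewrite nth_iota //.
Qed.

Lemma dist_le (T : finType) (e : rel T) x y k : walkb e x y k -> dist e x y <= k.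
Proof.
move=> Hw; rewrite leqNgt; apply/negP => Hk.
have Hs := find_size (walkb e x y) (iota 0 #|T|); rewrite size_iota in Hs.
have := before_find 0 Hk; rewrite nth_iota ?(leq_trans Hk Hs) //= Hw.
by [].
Qed.

Lemma step (T : finType) (e : rel T) x y : connect e x y -> x != y ->
  exists2 x', e x x' & dist e x' y < dist e x y.
Proof.
move=> /dist_spec [Hlt Hw] Hne.
move: Hw; case Hd: (dist e x y) => [|k] Hw.
  by rewrite (walk0 Hw) eqxx in Hne.
case/walkS: Hw => x' Hxx' Hw'; exists x' => //.
by have := dist_le Hw'; rewrite ltnS.
Qed.

Lemma dist_edge (T : finType) (e : rel T) x y : irreflexive e -> connect e x y ->
  e x y -> dist e x y = 1.
Proof.
move=> Hirr Hc Hxy; have [_ Hw] := dist_spec Hc.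
have H1 : dist e x y <= 1.
  by apply: dist_le; apply/existsP; exists [tuple y]; rewrite /= Hxy eqxx.
move: Hw H1; case: (dist e x y) => [|[|k]] // /walk0 Exy.
by rewrite Exy Hirr in Hxy.
Qed.

Lemma dhat_cube n (sa sb tx ty : {ffun 'I_n -> bool}) cp cq :
  flip1 sa sb cp -> flip1 tx ty cq ->
  minn (minn (hamming sa tx) (hamming sa ty)) (minn (hamming sb tx) (hamming sb ty))
  = #|[set i | [&& i != cp, i != cq & sa i != tx i]]|.
Proof.
move=> Ha Hb.
set N := #|_|.
have Hle : forall s t, (s = sa \/ s = sb) -> (t = tx \/ t = ty) -> N <= hamming s t.
  move=> s t Hs Ht; apply: subset_leq_card; apply/subsetP => i.
  rewrite !inE => /and3P [Hi1 Hi2 Hi3].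
  have -> : s i = sa i by case: Hs => ->; rewrite ?(flipE Ha) ?(negbTE Hi1).
  have -> : t i = tx i by case: Ht => ->; rewrite ?(flipE Hb) ?(negbTE Hi2).
  done.
have [s [t [Hs [Ht Heq]]]] : exists s t, (s = sa \/ s = sb) /\ (t = tx \/ t = ty)
    /\ hamming s t = N.
  pose s := if sa cp == tx cp then sa else sb.
  pose t := if s cq == tx cq then tx else ty.
  exists s, t; split; first by rewrite /s; case: ifP; auto.
  split; first by rewrite /t; case: ifP; auto.
  have Hs_cp : s cp = tx cp.
    rewrite /s; case: ifP => [/eqP //|].
    by rewrite (flipE Ha) eqxx; case: (sa cp); case: (tx cp).
  have Hs_i : forall i, i != cp -> s i = sa i.
    by rewrite /s; case: ifP => // _ i Hi; rewrite (flipE Ha) (negbTE Hi).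
  have Ht_cq : t cq = s cq.
    rewrite /t; case: ifP => [/eqP //|].
    by rewrite (flipE Hb) eqxx; case: (s cq); case: (tx cq).
  have Ht_i : forall i, i != cq -> t i = tx i.
    by rewrite /t; case: ifP => // _ i Hi; rewrite (flipE Hb) (negbTE Hi).
  rewrite /hamming /N; apply: eq_card => i; rewrite !inE.
  case: (i =P cp) => [-> | /eqP Hicp].
    rewrite /=.
    case: (cp =P cq) => [Ec | /eqP Hne].
      by rewrite {2}Ec Ht_cq -Ec eqxx.
    by rewrite Ht_i // Hs_cp eqxx.
  case: (i =P cq) => [-> | /eqP Hicq].
    by rewrite Ht_cq eqxx andbF.
  by rewrite Hs_i // Ht_i // Hicp Hicq.
have H1 := Hle sa tx (or_introl erefl) (or_introl erefl).
have H2 := Hle sa ty (or_introl erefl) (or_intror erefl).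
have H3 := Hle sb tx (or_intror erefl) (or_introl erefl).
have H4 := Hle sb ty (or_intror erefl) (or_intror erefl).
by case: Hs Heq => ->; case: Ht => -> Heq; lia.
Qed.

Theorem lemma3p2 (T : finType) (e : rel T) :
  simple_graph e -> connected_graph e -> partial_cube e ->
  forall p q : T * T, dart e p -> dart e q ->
    dhat e p q = \sum_(K in theta_classes e) delta e K p q.
Proof.
move=> [Hirr Hsym] Hconn [n [f Hd]] p q Hp Hq.
have Hflip : forall u v, e u v -> exists c, flip1 (f u) (f v) c.
  move=> u v Huv; apply: ham1; rewrite -Hd; exact: dist_edge.
have Hstep : forall x y, x != y -> exists2 x', e x x' & dist e x' y < dist e x y.
  move=> x y; exact: step (Hconn x y).
pose I := [set i : 'I_n | [exists u : T * T, dart e u && (f u.1 i != f u.2 i)]].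
pose h := fun i : 'I_n => [set u : T * T | dart e u && (f u.1 i != f u.2 i)].
have HS : forall k a x, dist e a x <= k -> forall j, f a j != f x j -> j \in I.
  elim=> [|k IH] a x Hk j Hj.
    case: (eqVneq a x) => [Eax|/Hstep [a' _ Hlt]]; first by rewrite Eax eqxx in Hj.
    lia.
  case: (eqVneq a x) => [Eax|/Hstep [a' Haa' Hlt]]; first by rewrite Eax eqxx in Hj.
  have [c Hc] := Hflip _ _ Haa'.
  case: (j =P c) => [->| /eqP/negbTE Hjc].
    rewrite inE; apply/existsP; exists (a, a'); rewrite /dart /= Haa' /=.
    by rewrite (flipE Hc) eqxx; case: (f a c).
  apply: (IH a' x); first lia.
  by rewrite (flipE Hc) Hjc.
have Hrem : forall i u v, remove_edges e (h i) u v = e u v && (f u i == f v i).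
  move=> i u v; rewrite /remove_edges inE /dart /=.
  by case: (e u v) => //=; rewrite negbK.
have HC : forall i a x, connect (remove_edges e (h i)) a x = (f a i == f x i).
  move=> i a x; apply/idP/idP.
    case/connectP => s Hs ->; elim: s a Hs => [|y s IH] a //= /andP [Hay Hs].
    rewrite Hrem in Hay; case/andP: Hay => _ /eqP ->; exact: IH.
  move=> Hax; have : dist e a x <= dist e a x by [].
  move: {2}(dist e a x) => k; elim: k a Hax => [|k IH] a Hax Hk.
    case: (eqVneq a x) => [->|/Hstep [a' _ Hlt]]; [exact: connect0 | lia].
  case: (eqVneq a x) => [->|/Hstep [a' Haa' Hlt]]; first exact: connect0.
  have [c Hc] := Hflip _ _ Haa'.
  have Hsp := ham_split (f x) Hc.
  rewrite !Hd in Hlt Hk.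
  have Hic : (i == c) = false.
    apply/negbTE/eqP => Eic; rewrite -Eic Hax /= in Hsp; lia.
  have Ha'i : f a' i = f a i by rewrite (flipE Hc) Hic.
  apply: (@connect_trans _ _ a' a x).
    by apply: connect1; rewrite Hrem Haa' Ha'i eqxx.
  apply: IH; first by rewrite Ha'i.
  rewrite Hd; lia.
have Hth : forall u, dart e u -> forall c, flip1 (f u.1) (f u.2) c ->
    theta_class e u = h c.
  move=> u Hu c Hc; apply/setP => w; rewrite !inE; case Hw: (dart e w) => //=.
  have [c' Hc'] := Hflip _ _ Hw.
  by rewrite /theta !Hd (ham_theta Hc Hc') Hc' negbK.
have Hcls : theta_classes e = h @: I.
  apply/setP => K; apply/imsetP/imsetP.
    case=> u Hu ->; rewrite inE in Hu; have [c Hc] := Hflip _ _ Hu.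
    exists c; last exact: Hth.
    by rewrite inE; apply/existsP; exists u; rewrite Hu /= Hc eqxx.
  case=> i Hi ->; rewrite inE in Hi; case/existsP: Hi => u /andP [Hu Hui].
  exists u; first by rewrite inE.
  have [c Hc] := Hflip _ _ Hu.
  have Eic : i = c by apply/eqP; move: Hui; rewrite Hc negbK.
  by rewrite Eic; symmetry; exact: Hth.
have Hinj : {in I &, injective h}.
  move=> i j Hi _ Hij; rewrite inE in Hi; case/existsP: Hi => u /andP [Hu Hui].
  have : u \in h j by rewrite -Hij inE Hu.
  rewrite inE Hu /= => Huj.
  have [c Hc] := Hflip _ _ Hu.
  by move: Hui Huj; rewrite !Hc !negbK => /eqP -> /eqP ->.
have [cp Hcp] := Hflip _ _ Hp.
have [cq Hcq] := Hflip _ _ Hq.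
rewrite Hcls big_imset //=.
under eq_bigr => i _ do
  rewrite /delta HC !inE Hp Hq /= Hcp Hcq !negbK.
rewrite /dhat !Hd (dhat_cube Hcp Hcq).
rewrite -sum1_card big_mkcond [RHS]big_mkcond /=; apply: eq_bigr => i _.
rewrite inE; case E: [&& _, _ & _] => //.
  rewrite (HS _ p.1 q.1 (leqnn _) i) //; by case/and3P: E.
by case: (i \in I).
Qed.
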